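(* Let $\lambda\in\mathcal P_\epsilon(N)$ and let $\mathbf i$ be an admissible sequence for $\lambda$. Then $\Delta(\lambda^{\mathbf i})\subseteq\Delta(\lambda)$. Moreover, if $\lambda$ is non-singular then $\lambda^{\mathbf i}$ is non-singular.
   Context: $\mathcal P_\epsilon(N)$ ($\epsilon=\pm1$) is the set of partitions $\lambda=(\lambda_1\ge\dots\ge\lambda_n\ge1)$ of $N$ in which every part $m$ with $\epsilon(-1)^m=1$ occurs with even multiplicity; conventions $\lambda_0=0$, $\lambda_i=0$ for $i>n$. A 2-step of $\lambda$ is a pair $(i,i+1)$, $1\le i<n$, with $\epsilon(-1)^{\lambda_i}=\epsilon(-1)^{\lambda_{i+1}}=-1$, $\lambda_{i-1}\ne\lambda_i$, $\lambda_{i+1}\ne\lambda_{i+2}$; $\Delta(\lambda)$ is the set of 2-steps. A 2-step $(i,i+1)$ is bad if ($i>1$ and $\lambda_{i-1}-\lambda_i$ is even) or $\lambda_{i+1}-\lambda_{i+2}$ is even, good otherwise; $\lambda$ is non-singular if all its 2-steps are good. Kempken–Spaltenstein (KS) algorithm: for $1\le i\le n$, Case 1 occurs at $i$ if $\lambda_i\ge\lambda_{i+1}+2$, and then $\lambda^{(i)}=(\lambda_1-2,\dots,\lambda_i-2,\lambda_{i+1},\dots,\lambda_n)$; Case 2 occurs at $i$ if $(i,i+1)\in\Delta(\lambda)$ and $\lambda_i=\lambda_{i+1}$, and then $\lambda^{(i)}=(\lambda_1-2,\dots,\lambda_{i-1}-2,\lambda_i-1,\lambda_{i+1}-1,\lambda_{i+2},\dots,\lambda_n)$;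 zero parts are discarded and $\lambda^{(i)}\in\mathcal P_\epsilon(N-2i)$. Index $i$ is admissible for $\lambda$ if Case 1 or Case 2 occurs at $i$. A sequence $\mathbf i=(i_1,\dots,i_l)$ is admissible for $\lambda$ if each $i_k$ is admissible for $\lambda^{(i_1,\dots,i_{k-1})}$, where $\lambda^{\emptyset}=\lambda$ and $\lambda^{(i_1,\dots,i_k)}=(\lambda^{(i_1,\dots,i_{k-1})})^{(i_k)}$; write $\lambda^{\mathbf i}=\lambda^{(i_1,\dots,i_l)}$. *)

(* Defs.v *)
From mathcomp Require Import all_boot all_order all_algebra.
Set Implicit Arguments. Unset Strict Implicit. Unset Printing Implicit Defensive.
Import GRing.Theory Num.Theory.

(* A partition is a seq nat [:: λ_1; ...; λ_n]. *)

(* λ_i with 1-based index; λ_0 = 0 and λ_i = 0 for i > n. *)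
Definition part (s : seq nat) (i : nat) : nat :=
  if i is i'.+1 then nth 0 s i' else 0.

Definition sgn (eps : int) (m : nat) : int := (eps * (-1) ^+ m)%R.

Definition in_P (eps : int) (N : nat) (s : seq nat) : Prop :=
  [/\ sorted geq s, all (fun m => 0 < m) s, sumn s = N &
      forall m, m \in s -> sgn eps m = 1%R -> ~~ odd (count_mem m s)].

Definition two_step (eps : int) (s : seq nat) (i : nat) : bool :=
  [&& 1 <= i, i < size s,
      sgn eps (part s i) == (-1)%R, sgn eps (part s i.+1) == (-1)%R,
      part s i.-1 != part s i & part s i.+1 != part s i.+2].

Definition bad_step (s : seq nat) (i : nat) : bool :=
  ((1 < i) && ~~ odd (part s i.-1 - part s i)) || ~~ odd (part s i.+1 - part s i.+2).

Definition non_singular (eps : int) (s : seq nat) : Prop :=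
  forall i, two_step eps s i -> ~~ bad_step s i.

Definition case1 (s : seq nat) (i : nat) : bool :=
  (1 <= i <= size s) && (part s i.+1 + 2 <= part s i).

Definition case2 (eps : int) (s : seq nat) (i : nat) : bool :=
  two_step eps s i && (part s i == part s i.+1).

Definition admissible_idx (eps : int) (s : seq nat) (i : nat) : bool :=
  case1 s i || case2 eps s i.

(* λ^(i); meaningful when i is admissible (Case 1 and Case 2 are exclusive). *)
Definition ks_step (eps : int) (s : seq nat) (i : nat) : seq nat :=
  [seq x <- mkseq (fun j =>
      if case1 s i then
        (if j.+1 <= i then part s j.+1 - 2 else part s j.+1)
      else
        (if j.+1 < i then part s j.+1 - 2
         else if j.+1 <= i.+1 then part s j.+1 - 1 else part s j.+1))
      (size s) | x != 0].

Fixpoint admissible (eps : int) (s : seq nat) (ids : seq nat) : bool :=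
    if ids is i :: ids' then admissible_idx eps s i && admissible eps (ks_step eps s i) ids'
  else true.

Definition ks_seq (eps : int) (s : seq nat) (ids : seq nat) : seq nat :=
  foldl (ks_step eps) s ids.

(* Main.v *)
Require Import Defs.
From mathcomp Require Import all_boot all_order all_algebra.
From mathcomp Require Import zify.
Set Implicit Arguments. Unset Strict Implicit.
Import GRing.Theory Num.Theory.

Lemma path0 (u : seq nat) : path geq 0 u -> forall k, nth 0 u k = 0 /\ [seq x <- u | x != 0] = [::].
Proof.
elim: u => [|y u IH] //=; first by move=> _ k; rewrite nth_nil.
rewrite leqn0 => /andP[/eqP -> Hp] k; have {}IH := IH Hp.
split; last by rewrite /= (IH 0).2.
case: k => //= k; exact: (IH k).1.
Qed.

Lemma filter_nz_nth (u : seq nat) : sorted geq u ->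
  forall k, nth 0 [seq x <- u | x != 0] k = nth 0 u k.
Proof.
elim: u => [|x u IH] //= Hs k.
have Hu : sorted geq u by case: u Hs IH => //= y u /andP[].
case: eqP => [E|_].
- subst x; have H0 := @path0 u Hs; rewrite (H0 0).2 nth_nil.
  case: k => //= k; by rewrite (H0 k).1.
- case: k => //= k; exact: IH.
Qed.

Definition Inv (s : seq nat) : Prop :=
  (forall j, 0 < j -> part s j.+1 <= part s j) /\
  (forall j, 0 < j <= size s -> 0 < part s j).

Definition G (s : seq nat) (i j : nat) : nat :=
  if case1 s i then
    (if j <= i then part s j - 2 else part s j)
  else
    (if j < i then part s j - 2
     else if j <= i.+1 then part s j - 1 else part s j).

Lemma part_big s j : size s < j -> part s j = 0.
Proof. case: j => [|j] // H; rewrite /part nth_default //. Qed.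

Arguments part : simpl never.
Ltac splitifs := repeat (match goal with |- context[if ?c then _ else _] => case: (boolP c) => ? end).

Lemma Gmono eps s i : Inv s -> admissible_idx eps s i -> forall j, 0 < j -> G s i j.+1 <= G s i j.
Proof.
move=> [Hso Hpos] Hadm j Hj; have Hsj := Hso j Hj.
rewrite /G; case: (boolP (case1 s i)) => Hc1.
- move: Hc1 => /andP[/andP[Hi1 Hi2] Hc]; splitifs; try lia.
  have E : i = j by lia. subst i; lia.
- move: Hadm; rewrite /admissible_idx (negbTE Hc1) /= /case2 /two_step => /andP[/and5P[Hi1 Hi2 _ _ /andP[Hn1 Hn2]] /eqP He].
  case: i Hi1 Hi2 Hn1 Hn2 He Hc1 => [|m] // _ /= Hi2 Hn1 Hn2 He _.
  have [Hlt|[E|[E|[E|Hgt]]]] : j < m \/ j = m \/ j = m.+1 \/ j = m.+2 \/ m.+2 < j by lia.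
  + splitifs; lia.
  + subst j; splitifs; lia.
  + subst j; splitifs; lia.
  + subst j; splitifs; lia.
  + splitifs; lia.
Qed.

Lemma G0 s i : G s i 0 = 0.
Proof. by rewrite /G /part; splitifs. Qed.

Lemma Gbig s i j : size s < j -> G s i j = 0.
Proof. move=> H; rewrite /G part_big //; by splitifs. Qed.

Lemma part_ks eps s i : Inv s -> admissible_idx eps s i ->
  forall j, part (ks_step eps s i) j = G s i j.
Proof.
move=> Hinv Hadm j.
set u := mkseq (fun j => G s i j.+1) (size s).
have Hsu : sorted geq u.
  apply/(sortedP 0) => k; rewrite size_mkseq => Hk.
  rewrite !nth_mkseq //; last by lia.
  exact: (Gmono Hinv Hadm (ltn0Sn k)).
have -> : ks_step eps s i = [seq x <- u | x != 0] by [].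
case: j => [|j]; first by rewrite G0.
rewrite /part filter_nz_nth // /u.
case: (ltnP j (size s)) => Hj; first by rewrite nth_mkseq.
by rewrite nth_default ?size_mkseq // Gbig.
Qed.

Lemma size_ks eps s i : size (ks_step eps s i) <= size s.
Proof. by rewrite /ks_step size_filter (leq_trans (count_size _ _)) // size_mkseq. Qed.

Lemma Inv_ks eps s i : Inv s -> admissible_idx eps s i -> Inv (ks_step eps s i).
Proof.
move=> Hinv Hadm; split => j Hj.
- rewrite !(part_ks Hinv Hadm); exact: (Gmono Hinv Hadm).
- case: j Hj => [|j] // /andP[_ Hj].
  rewrite /part lt0n; have : nth 0 (ks_step eps s i) j \in ks_step eps s i by apply: mem_nth.
  by rewrite mem_filter => /andP[].
Qed.

Lemma sgnE eps m : (eps = 1%R \/ eps = (-1)%R) -> (sgn eps m == (-1)%R) = (odd m == (eps == 1%R)).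
Proof.
rewrite /sgn -signr_odd; case: (odd m) => [] [] -> //=.
Qed.

Lemma mono s : Inv s -> forall a b, 0 < a -> a <= b -> part s b <= part s a.
Proof.
move=> [Hso _] a b Ha; elim: b => [|b IH] Hab; first by lia.
case: (ltngtP a b.+1) => H; [|lia|by subst].
exact: leq_trans (Hso b ltac:(lia)) (IH ltac:(lia)).
Qed.

Arguments part : simpl never.
Ltac simplifs := repeat (match goal with |- context[if ?c then _ else _] =>
  first [rewrite (_ : c = true); last by apply/idP; lia | rewrite (_ : c = false); last by apply/negbTE; lia] end).
Ltac possplit k m := (have [H|[H|[H|[H|[H|[H|[H|[H|H]]]]]]]] : m.+4 <= k \/ k = m.+3 \/ k = m.+2 \/ k = m.+1 \/ k = m \/ m = k.+1 \/ m = k.+2 \/ m = k.+3 \/ k.+4 <= m by lia); try subst k; try subst m.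

Ltac oddsimp := repeat (match goal with |- context[odd (?a - ?b)] =>
  rewrite (@oddB a b); last by lia end).
Ltac boolfin :=
  intros;
  repeat match goal with H : is_true (?b == ?o) |- _ => is_var b; move/eqP: H => H; subst b end;
  repeat match goal with b : bool |- _ => destruct b end;
  simpl in *; solve [ by [] | match goal with H : false = true |- _ => discriminate H end | match goal with H : is_true false |- _ => discriminate H end ].
Ltac genodd' := repeat (match goal with |- context[odd ?x] => generalize (odd x) end).
Ltac genodd := repeat (match goal with |- context[odd ?x] => generalize (odd x); intro end).

Lemma core eps s i j : (eps = 1%R \/ eps = (-1)%R) -> Inv s -> admissible_idx eps s i ->
  two_step eps (ks_step eps s i) j ->
  two_step eps s j /\ (non_singular eps s -> ~~ bad_step (ks_step eps s i) j).
Proof.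
move=> He Hinv Hadm.
have Hsz := size_ks eps s i.
have Hp := part_ks Hinv Hadm.
have Hmono := mono Hinv.
move: (Hinv) => [Hso Hpos].
rewrite /two_step /bad_step !Hp !sgnE //.
set o := (eps == 1%R).
have HtsI : forall x, two_step eps s x = [&& 1 <= x, x < size s,
      odd (part s x) == o, odd (part s x.+1) == o,
      part s x.-1 != part s x & part s x.+1 != part s x.+2].
  by move=> x; rewrite /two_step !sgnE.
case: j => [|k]; first by [].
have Hi : 1 <= i.
  move: Hadm; rewrite /admissible_idx /case1 /case2 /two_step.
  by case/orP => [/andP[/andP[]]|/andP[/andP[]]].
case: i Hi Hadm Hp Hsz => [|m] // _ Hadm Hp Hsz.
rewrite /= /G.
move=> Ht; have Hk : k.+2 <= size s.
  by move: Ht => /andP[Hk _]; lia.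
have P1 : 0 < part s k.+1 by apply: Hpos; lia.
have P2 : 0 < part s k.+2 by apply: Hpos; lia.
have F2 := Hso k.+1 isT. have F3 := Hso k.+2 isT.
have F5 := Hso m.+1 isT. have F6 := Hso m.+2 isT.
have Z0 : part s 0 = 0 by [].
have F1 : (k = 0 /\ part s k = 0) \/ part s k.+1 <= part s k.
  by case: k {Ht Hk P1 P2 F2 F3} => [|k]; [left|right; apply: Hso].
have F4 : (m = 0 /\ part s m = 0) \/ part s m.+1 <= part s m.
  by case: m {Ht Hp Hsz F5 F6 Hadm} => [|m]; [left|right; apply: Hso].
have M1 : k.+3 <= m -> part s m <= part s k.+3 by move=> h; apply: Hmono; lia.
have M2 : k.+3 <= m -> part s m.+1 <= part s k.+3 by move=> h; apply: Hmono; lia.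
case: (boolP (case1 s m.+1)) Ht => Hc1 Ht.
{ move: (Hc1); rewrite /case1 => /andP[/andP[_ Hm1] Hc].
  have P3 : 0 < part s m.+1 by apply: Hpos; lia.
  clear Hadm Hc1 Hp Hso Hpos Hmono.
  case/and5P: Ht => _ Ht1 Ht2 Ht3 Ht4.
  have Hts : two_step eps s k.+1.
  { rewrite HtsI /=; clear HtsI; apply/and5P; split.
    { exact: Hk. }
    { move: Ht1; clearbody o; clear Ht2 Ht3 Ht4; possplit k m.
      all: try (destruct k as [|k]); try (destruct m as [|m]).
      all: simplifs; rewrite /=.
      all: (oddsimp; rewrite /= ?addbF ?addbT; move: o; genodd'; repeat match goal with H : _ |- _ => clear H end; boolfin). }
    { move: Ht2; clearbody o; clear Ht1 Ht3 Ht4; possplit k m.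
      all: try (destruct k as [|k]); try (destruct m as [|m]).
      all: simplifs; rewrite /=.
      all: (oddsimp; rewrite /= ?addbF ?addbT; move: o; genodd'; repeat match goal with H : _ |- _ => clear H end; boolfin). }
    { move: Ht3; clear Ht1 Ht2 Ht4; possplit k m.
      all: simplifs; lia. }
    { move: Ht4; clear Ht1 Ht2 Ht3; possplit k m.
      all: simplifs; lia. } }
  split; first by move: Hts; rewrite HtsI.
  move=> Hns; have := Hns _ Hts; rewrite /bad_step /=.
  clearbody o; clear HtsI Hns Ht1 Ht2 Ht3 Ht4 Hts.
  possplit k m.
  all: try (destruct k as [|k]); try (destruct m as [|m]).
  all: simplifs; rewrite /=.
  all: (oddsimp; rewrite /= ?addbF ?addbT; move: o; genodd'; repeat match goal with H : _ |- _ => clear H end; boolfin).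
  }
{ move: Hadm; rewrite /admissible_idx (negbTE Hc1) /= /case2 => /andP[Htm /eqP Heq].
  have Htm' := Htm; rewrite HtsI /= in Htm'.
  case/and5P: Htm' => Hm1 Ho3 Ho4 Hn3 Hn4.
  have P3 : 0 < part s m.+1 by apply: Hpos; lia.
  have P4 : 0 < part s m.+2 by apply: Hpos; lia.
  clear Hc1 Hp Hso Hpos Hmono.
  case/and5P: Ht => _ Ht1 Ht2 Ht3 Ht4.
  have Hts : two_step eps s k.+1.
  { rewrite HtsI /=; clear HtsI; apply/and5P; split.
    { exact: Hk. }
    { move: Ht1 Ho3 Ho4; clearbody o; clear Ht2 Ht3 Ht4 Hn4 Htm; rewrite -?Heq; possplit k m.
      all: try (destruct k as [|k]); try (destruct m as [|m]).
      all: simplifs; rewrite /= -?Heq.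
      all: (oddsimp; rewrite /= ?addbF ?addbT; move: o; genodd'; repeat match goal with H : _ |- _ => clear H end; boolfin). }
    { move: Ht2 Ho3 Ho4; clearbody o; clear Ht1 Ht3 Ht4 Hn4 Htm; rewrite -?Heq; possplit k m.
      all: try (destruct k as [|k]); try (destruct m as [|m]).
      all: simplifs; rewrite /= -?Heq.
      all: (oddsimp; rewrite /= ?addbF ?addbT; move: o; genodd'; repeat match goal with H : _ |- _ => clear H end; boolfin). }
    { move: Ht3; clear Ht1 Ht2 Ht4 Ho3 Ho4 Htm; possplit k m.
      all: simplifs; lia. }
    { move: Ht4; clear Ht1 Ht2 Ht3 Ho3 Ho4 Htm; possplit k m.
      all: simplifs; lia. } }
  split; first by move: Hts; rewrite HtsI.
  move=> Hns; have := Hns _ Hts; have := Hns _ Htm; rewrite /bad_step /=.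
  have Hts' := Hts; rewrite HtsI /= in Hts'; case/and5P: Hts' => _ Ho1 Ho2 _ _.
  clearbody o; clear HtsI Hns Htm Hts Ht3 Ht4; move: Ht1 Ht2 Ho1 Ho2 Ho3 Ho4; rewrite -?Heq.
  possplit k m.
  all: try (destruct k as [|k]); try (destruct m as [|m]).
  all: simplifs; rewrite /= -?Heq.
  all: (oddsimp; rewrite /= ?addbF ?addbT; move: o; genodd'; repeat match goal with H : _ |- _ => clear H end; boolfin). }
Qed.


Lemma Inv_of_P eps N s : in_P eps N s -> Inv s.
Proof.
case=> Hs Hall _ _; split.
- case=> [|j] // _; rewrite /part.
  case: (ltnP j.+1 (size s)) => Hj.
  + exact: (sortedP 0 Hs j Hj).
  + by rewrite (nth_default 0 Hj).
- case=> [|j] // /andP[_ Hj]; rewrite /part.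
  exact: (allP Hall _ (mem_nth 0 Hj)).
Qed.

Lemma gen eps ids : forall s, (eps = 1%R \/ eps = (-1)%R) -> Inv s -> admissible eps s ids ->
  (forall i, two_step eps (ks_seq eps s ids) i -> two_step eps s i) /\
  (non_singular eps s -> non_singular eps (ks_seq eps s ids)).
Proof.
elim: ids => [|i ids IH] s He Hinv; first by split.
case/andP => Hi Hr.
have [IH1 IH2] := IH (ks_step eps s i) He (Inv_ks Hinv Hi) Hr.
have -> : ks_seq eps s (i :: ids) = ks_seq eps (ks_step eps s i) ids by [].
split.
- move=> j H; exact: (core He Hinv Hi (IH1 _ H)).1.
- move=> Hns; apply: IH2 => j H; exact: (core He Hinv Hi H).2 Hns.
Qed.


Unset Implicit Arguments.
Theorem mainTheorem9 (eps : int) (N : nat) (lam : seq nat) (ids : seq nat) :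
  (eps = 1%R \/ eps = (-1)%R) ->
  in_P eps N lam ->
  admissible eps lam ids ->
  (forall i, two_step eps (ks_seq eps lam ids) i -> two_step eps lam i) /\
  (non_singular eps lam -> non_singular eps (ks_seq eps lam ids)).
Proof. move=> He HP; exact: gen He (Inv_of_P HP). Qed.
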